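(* For $T>0$ and $x\in[0,1]$ let $$I(x) = \frac{2x}{\pi}\int_{-T}^{T}\frac{e^s}{e^{2s}+x}\,ds.$$ Then for every $T>0$ and every $x\in[0,1]$, $$|\sqrt{x}-I(x)| < \frac{4}{\pi}e^{-T} < \frac32 e^{-T}.$$ *)

(* Defs.v *)
From Stdlib Require Import Reals.
From Coquelicot Require Import Coquelicot.
Open Scope R_scope.

Definition I_T (T x : R) : R :=
  (2 * x / PI) * RInt (fun s => exp s / (exp (2 * s) + x)) (- T) T.

(* Main.v *)
Require Import Defs.
From Stdlib Require Import Reals.
From Coquelicot Require Import Coquelicot.
From Stdlib Require Import Lra.
Open Scope R_scope.

Lemma atan_mvt a b : a <= b -> exists c, a <= c <= b /\ atan b - atan a = / (1 + c²) * (b - a).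
Proof.
  intros Hab.
  destruct (MVT_gen atan a b (fun c => / (1 + c²))) as [c [Hc E]].
  - intros; apply is_derive_atan.
  - intros; apply derivable_continuous_pt, derivable_pt_atan.
  - exists c. rewrite Rmin_left, Rmax_right in Hc by lra. split; auto.
Qed.

Lemma atan_le y : 0 <= y -> atan y <= y.
Proof.
  intros Hy. destruct (atan_mvt 0 y Hy) as [c [Hc E]].
  rewrite atan_0 in E.
  assert (0 < / (1 + c²) <= 1).
  { split. apply Rinv_0_lt_compat. pose proof (Rle_0_sqr c); lra.
    rewrite <- Rinv_1. apply Rinv_le_contravar; [lra|]. pose proof (Rle_0_sqr c); lra. }
  nra.
Qed.

Lemma atan_lt y : 0 < y -> atan y < y.
Proof.
  intros Hy. assert (H1 := atan_le (y/2) ltac:(lra)).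
  destruct (atan_mvt (y/2) y ltac:(lra)) as [c [Hc E]].
  assert (0 < / (1 + c²) < 1).
  { split. apply Rinv_0_lt_compat. pose proof (Rle_0_sqr c); lra.
    rewrite <- Rinv_1. apply Rinv_lt_contravar; [pose proof (Rle_0_sqr c); nra|]. 
    assert (0 < c²) by (unfold Rsqr; nra). lra. }
  nra.
Qed.

Lemma integral_val x T : 0 < x ->
  RInt (fun s => exp s / (exp (2 * s) + x)) (- T) T =
  atan (exp T / sqrt x) / sqrt x - atan (exp (-T) / sqrt x) / sqrt x.
Proof.
  intros Hx. set (r := sqrt x).
  assert (Hr : 0 < r) by (apply sqrt_lt_R0; auto).
  assert (Hrr : r * r = x) by (apply sqrt_sqrt; lra).
  apply is_RInt_unique.
  apply (is_RInt_derive (fun s => atan (exp s / r) / r)).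
  - intros s _.
    assert (Hd : is_derive (fun s => exp s / r) s (exp s / r)) by (auto_derive; [lra| field; lra]).
    assert (H := is_derive_comp atan (fun s => exp s / r) s _ _ (is_derive_atan (exp s / r)) Hd).
    assert (H2 := is_derive_scal _ _ (/ r) _ H).
    apply (is_derive_ext (fun s => / r * atan (exp s / r))).
    { intros t. unfold Rdiv. apply Rmult_comm. }
    replace (exp s / (exp (2 * s) + x)) with (/ r * scal (exp s / r) (/ (1 + (exp s / r)²))); auto.
    unfold scal; simpl; unfold mult; simpl.
    replace (2 * s) with (s + s) by ring. rewrite exp_plus. rewrite <- Hrr. unfold Rsqr.
    pose proof (exp_pos s). field. split; [|lra]. nra.
  - intros s _. apply (ex_derive_continuous (K:=R_AbsRing) (V:=R_NormedModule)). auto_derive.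
    pose proof (exp_pos (2*s)); lra.
Qed.

Theorem lemmaA1 : forall T x : R, 0 < T -> 0 <= x <= 1 ->
  Rabs (sqrt x - I_T T x) < 4 / PI * exp (- T) /\
  4 / PI * exp (- T) < 3 / 2 * exp (- T).
Proof.
  intros T x HT Hx.
  assert (HPI : 3 < PI) by (pose proof PI2_3_2; lra).
  assert (He : 0 < exp (- T)) by apply exp_pos.
  assert (H4 : 0 < 4 / PI) by (apply Rdiv_lt_0_compat; lra).
  split.
  2:{ apply Rmult_lt_compat_r; [exact He|].
      apply Rmult_lt_reg_r with PI; [lra|]. unfold Rdiv.
      rewrite Rmult_assoc, Rinv_l by lra. lra. }
  destruct (Req_dec x 0) as [E0|Hx0].
  { subst x. unfold I_T. rewrite sqrt_0. 
    replace (0 - 2 * 0 / PI * _) with 0 by (unfold Rdiv; ring).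
    rewrite Rabs_R0. nra. }
  assert (Hxp : 0 < x) by lra.
  unfold I_T. rewrite integral_val by exact Hxp.
  set (r := sqrt x).
  assert (Hr : 0 < r) by (apply sqrt_lt_R0; auto).
  assert (Hrr : r * r = x) by (apply sqrt_sqrt; lra).
  set (e := exp (- T)). assert (He2 : 0 < e) by exact He.
  assert (HeT : exp T = / e) by (unfold e; rewrite exp_Ropp, Rinv_inv; reflexivity).
  assert (HA : atan (exp T / r) = PI / 2 - atan (r * e)).
  { rewrite <- atan_inv. f_equal. rewrite HeT. field. split; lra.
    apply Rmult_lt_0_compat; lra. }
  rewrite HA.
  set (A := atan (r * e)). set (B := atan (e / r)).
  assert (HA0 : 0 < A) by (unfold A; rewrite <- atan_0; apply atan_increasing; nra).
  assert (HB0 : 0 < B) by (unfold B; rewrite <- atan_0; apply atan_increasing;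
                            apply Rdiv_lt_0_compat; lra).
  assert (HA1 : A < r * e) by (apply atan_lt; nra).
  assert (HB1 : B < e / r) by (apply atan_lt; apply Rdiv_lt_0_compat; lra).
  replace (r - 2 * x / PI * ((PI / 2 - A) / r - B / r)) with (2 * r / PI * (A + B)).
  2:{ rewrite <- Hrr. field. split; lra. }
  assert (Hpos : 0 < 2 * r / PI * (A + B)).
  { apply Rmult_lt_0_compat; [apply Rdiv_lt_0_compat|]; lra. }
  rewrite Rabs_pos_eq by lra.
  apply Rle_lt_trans with (2 * r / PI * (r * e + B)).
  { apply Rmult_le_compat_l; [apply Rlt_le, Rdiv_lt_0_compat|]; lra. }
  apply Rlt_le_trans with (2 * r / PI * (r * e + e / r)).
  { apply Rmult_lt_compat_l; [apply Rdiv_lt_0_compat|]; lra. }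
  replace (2 * r / PI * (r * e + e / r)) with (2 / PI * e * (r * r + 1)) by (field; split; lra).
  replace (4 / PI * e) with (2 / PI * e * 2) by (field; lra).
  apply Rmult_le_compat_l.
  - apply Rmult_le_pos; [apply Rlt_le, Rdiv_lt_0_compat|]; lra.
  - lra.
Qed.
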